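(* Let $\gamma$ be an abstract graph and $\gamma'$ a subgraph of $\gamma$ such that every automorphism of $\gamma$ maps $\gamma'$ to itself setwise. Let $\Gamma$ be an embedding of $\gamma$ in $S^3$ and $\Gamma'$ the embedding of $\gamma'$ induced by $\Gamma$. Then ${\mathrm{TSG}}(\Gamma)\leq{\mathrm{TSG}}(\Gamma')$ and ${\mathrm{TSG}}_+(\Gamma)\leq{\mathrm{TSG}}_+(\Gamma')$.
   Context: An embedding of a finite graph $\gamma$ in $S^3$ places the vertices at distinct points and the edges as arcs that meet only at common endpoints; its image $\Gamma$ is a spatial graph. A homeomorphism $h$ of $S^3$ with $h(\Gamma)=\Gamma$ induces an automorphism of $\gamma$. The topological symmetry group ${\mathrm{TSG}}(\Gamma)$ is the subgroup of ${\mathrm{Aut}}(\gamma)$ of automorphisms induced by homeomorphisms of $(S^3,\Gamma)$; ${\mathrm{TSG}}_+(\Gamma)$ is the subgroup induced by orientation-preserving homeomorphisms. In the statement, an automorphism of $\gamma$ induced by a homeomorphism of $(S^3,\Gamma)$ is regarded, via that same homeomorphism (which preserves $\Gamma'$), as an automorphism of $\gamma'$. *)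

(* Defs.v *)
From HB Require Import structures.
From mathcomp Require Import all_boot all_order all_algebra.
From mathcomp Require Import all_classical all_reals all_analysis.
Set Implicit Arguments. Unset Strict Implicit. Unset Printing Implicit Defensive.
Import numFieldNormedType.Exports.
Import Order.TTheory GRing.Theory Num.Theory.
Local Open Scope classical_set_scope.
Local Open Scope ring_scope.

Section SpatialGraphs.
Variable R : realType.
Notation pt := 'rV[R]_4.

Definition S3 : set pt := [set x | \sum_(i < 4) (x ord0 i) ^+ 2 = 1].

Definition homeo_S3 (h : pt -> pt) : Prop :=
  (forall x, S3 x -> S3 (h x)) /\ {within S3, continuous h} /\
  exists g : pt -> pt,
    (forall x, S3 x -> S3 (g x)) /\ {within S3, continuous g} /\
    (forall x, S3 x -> g (h x) = x) /\ (forall x, S3 x -> h (g x) = x).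

Definition arcset (a : R -> pt) : set pt := a @` `[0, 1]%classic.

(* a is an arc in S^3 from P to Q: a topological embedding of [0,1]
   (continuous injective from a compact space, hence an embedding). *)
Definition is_arc (a : R -> pt) (P Q : pt) : Prop :=
  {within `[0, 1]%classic, continuous a} /\
  (forall s t, `[0, 1]%classic s -> `[0, 1]%classic t -> a s = a t -> s = t) /\
  arcset a `<=` S3 /\ a 0 = P /\ a 1 = Q.

Variable V : finType.

(* A (sub)graph on V is given by a vertex set W and an edge relation e
   (symmetric, irreflexive, with edges only between vertices of W). *)
Definition is_embedding (W : {set V}) (e : rel V) (p : V -> pt)
    (arc : V -> V -> R -> pt) : Prop :=
  (forall x y, x \in W -> y \in W -> p x = p y -> x = y) /\
  (forall x, x \in W -> S3 (p x)) /\
  (forall x y, e x y ->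
     [/\ x \in W, y \in W, x != y, is_arc (arc x y) (p x) (p y)
       & arcset (arc y x) = arcset (arc x y)]) /\
  (forall x y u v, e x y -> e u v -> [set x; y]%SET != [set u; v]%SET ->
     arcset (arc x y) `&` arcset (arc u v) `<=`
       p @` [set z | z \in ([set x; y] :&: [set u; v])%SET]) /\
  (forall x y z, e x y -> z \in W -> arcset (arc x y) (p z) -> z = x \/ z = y).

Definition spatial (W : {set V}) (e : rel V) (p : V -> pt)
    (arc : V -> V -> R -> pt) : set pt :=
  p @` [set x | x \in W] `|`
  \bigcup_(xy in [set xy : V * V | e xy.1 xy.2]) arcset (arc xy.1 xy.2).

Definition graph_aut (W : {set V}) (e : rel V) (f : V -> V) : Prop :=
  (forall x, x \in W -> f x \in W) /\
  (forall x y, x \in W -> y \in W -> f x = f y -> x = y) /\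
  (forall x y, x \in W -> y \in W -> e (f x) (f y) = e x y).

Definition induces (W : {set V}) (e : rel V) (p : V -> pt)
    (arc : V -> V -> R -> pt) (h : pt -> pt) (f : V -> V) : Prop :=
  h @` spatial W e p arc = spatial W e p arc /\
  (forall x, x \in W -> h (p x) = p (f x)) /\
  (forall x y, e x y -> h @` arcset (arc x y) = arcset (arc (f x) (f y))).

(* Automorphisms induced by homeomorphisms of S^3 in a class Hc.
   Hc = all homeomorphisms gives TSG; Hc = orientation-preserving ones
   gives TSG_+. *)
Definition TSG_in (Hc : (pt -> pt) -> Prop) (W : {set V}) (e : rel V)
    (p : V -> pt) (arc : V -> V -> R -> pt) (f : V -> V) : Prop :=
  graph_aut W e f /\
  exists h, homeo_S3 h /\ Hc h /\ induces W e p arc h f.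

Definition TSG := TSG_in (fun _ => True).

End SpatialGraphs.

(* Main.v *)
Require Import Defs.
From HB Require Import structures.
From mathcomp Require Import all_boot all_order all_algebra.
From mathcomp Require Import all_classical all_reals all_analysis.
Import numFieldNormedType.Exports.

Theorem mainTheorem3 (R : realType) (V : finType) (adj : rel V)
  (adj_sym : symmetric adj) (adj_irr : irreflexive adj)
  (V' : {set V}) (adj' : rel V)
  (adj'_sym : symmetric adj')
  (sub_edges : forall x y, adj' x y -> [/\ adj x y, x \in V' & y \in V'])
  (aut_pres : forall s : V -> V, graph_aut [set: V] adj s ->
     (forall x, (s x \in V') = (x \in V')) /\
     (forall x y, adj' (s x) (s y) = adj' x y))
  (p : V -> 'rV[R]_4) (arc : V -> V -> R -> 'rV[R]_4)
  (emb : is_embedding [set: V] adj p arc) :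
  (forall f : V -> V, TSG [set: V] adj p arc f -> TSG V' adj' p arc f) /\
  (forall (Hc : ('rV[R]_4 -> 'rV[R]_4) -> Prop) (f : V -> V),
     TSG_in Hc [set: V] adj p arc f -> TSG_in Hc V' adj' p arc f).
Proof.
have setT_in : forall x : V, x \in [set: V]%SET by move=> x; rewrite inE.
have key : forall (Hc : ('rV[R]_4 -> 'rV[R]_4) -> Prop) (f : V -> V),
     TSG_in Hc [set: V] adj p arc f -> TSG_in Hc V' adj' p arc f.
  move=> Hc f [aut [h [hh [hc [hsp [hp harc]]]]]].
  have [fV' fadj'] := aut_pres f aut.
  case: aut => [fW [finj fe]].
  have inj : injective f := fun x y => finj x y (setT_in x) (setT_in y).
  have [g fg gf] := injF_bij inj.
  split.
    split; first by move=> x; rewrite fV'.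
    split; first by move=> x y _ _; exact: inj.
    by move=> x y _ _; rewrite fadj'.
  exists h; split => //; split => //; split; last split.
  - apply/seteqP; split.
    + move=> _ [z [[x xV <-] | [[x y] /= e' hz]] <-].
      * left; exists (f x); first by rewrite /= fV'.
        by rewrite hp ?in_setT.
      * right; exists (f x, f y); first by rewrite /= fadj'.
        have [exy _ _] := sub_edges x y e'.
        rewrite /= -(harc x y exy); by exists z.
    + move=> z [[x xV <-] | [[x y] /= e' hz]].
      * exists (p (g x)); first by left; exists (g x) => //=; rewrite -fV' gf.
        by rewrite hp ?in_setT // gf.
      * have e2 : adj' (g x) (g y) by rewrite -fadj' !gf.
        have [exy _ _] := sub_edges _ _ e2.
        move: hz; rewrite -{1}(gf x) -{1}(gf y) -(harc _ _ exy) => -[w hw <-].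
        exists w => //; right; by exists (g x, g y).
  - by move=> x _; rewrite hp ?in_setT.
  - move=> x y e'; have [exy _ _] := sub_edges x y e'; exact: harc.
split => //; exact: key.
Qed.
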